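(* Let $R$ be a Noetherian ring and $\Gamma$ a finitely generated group with a word metric. Let $\phi\colon F\to F'$ be an $R[\Gamma]$-homomorphism between finitely generated $R[\Gamma]$-modules, and let $\Sigma_F$, $\Sigma_{F'}$ be arbitrary finite generating sets of $F$ and $F'$. Then $\phi$ is boundedly controlled as an $R$-linear homomorphism of $\Gamma$-filtered $R$-modules $s(F,\Sigma_F)\to s(F',\Sigma_{F'})$.
   Context: For a subset $S\subset\Gamma$ and $b\ge0$, $S[b]$ is the metric $b$-enlargement of $S$ in the word metric. A $\Gamma$-filtered $R$-module is an $R$-module $F$ with an inclusion-preserving assignment $S\mapsto F(S)$ of $R$-submodules to subsets $S\subset\Gamma$ with $F(\Gamma)=F$. For a finitely generated $R[\Gamma]$-module $F$ with finite generating set $\Sigma$, $s(F,\Sigma)$ is the $\Gamma$-filtered $R$-module with $F(S)$ the $R$-submodule generated by $\{s\sigma : s\in S,\ \sigma\in\Sigma\}$. An $R$-homomorphism $f\colon F\to F'$ of filtered modules is boundedly controlled if there is $b\ge 0$ with $f(F(S))\subset F'(S[b])$ for all $S\subset\Gamma$. *)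

(* Defs.v *)
From HB Require Import structures.
From mathcomp Require Import all_boot all_order all_algebra.
Set Implicit Arguments. Unset Strict Implicit. Unset Printing Implicit Defensive.
Import GRing.Theory.

Local Open Scope ring_scope.

Definition left_ideal (R : pzRingType) (I : R -> Prop) : Prop :=
  [/\ I 0, (forall x y, I x -> I y -> I (x + y)) & (forall r x, I x -> I (r * x))].

Definition in_left_ideal_gen (R : pzRingType) (s : seq R) (x : R) : Prop :=
  exists c : seq R, size c = size s /\ x = \sum_(i < size s) c`_i * s`_i.

Definition noetherian (R : pzRingType) : Prop :=
  forall I : R -> Prop, left_ideal I ->
    exists s : seq R, forall x, I x <-> in_left_ideal_gen s x.

Section Groups.
Variable G : groupType.
Local Open Scope group_scope.

Definition is_word (gens : seq G) (w : seq G) : Prop :=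
  forall x, x \in w -> (x \in gens) \/ (x^-1 \in gens).

Definition generates (gens : seq G) : Prop :=
  forall g : G, exists w, is_word gens w /\ g = \prod_(x <- w) x.

(* word metric: d(g,h) <= n  iff  g^-1 h is a product of at most n
   generators or inverses of generators. *)
Definition word_dist_le (gens : seq G) (g h : G) (n : nat) : Prop :=
  exists w, is_word gens w /\ (size w <= n)%N /\ g^-1 * h = \prod_(x <- w) x.

Definition enlarge (gens : seq G) (S : G -> Prop) (b : nat) : G -> Prop :=
  fun h => exists2 s, S s & word_dist_le gens s h b.

End Groups.

(* An R[G]-module structure on an R-module F: an action of G on F by
   R-linear maps. *)
Definition is_RG_action (R : pzRingType) (G : groupType) (F : lmodType R)
    (act : G -> F -> F) : Prop :=
  [/\ (forall g (r : R) (x y : F), act g (r *: x + y) = r *: act g x + act g y),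
      (forall x, act 1%g x = x) &
      (forall g h x, act (g * h)%g x = act g (act h x))].

Definition in_Rspan (R : pzRingType) (F : lmodType R) (P : F -> Prop) (x : F)
    : Prop :=
  exists l : seq (R * F), (forall p, p \in l -> P p.2) /\
    x = \sum_(p <- l) p.1 *: p.2.

(* The G-filtered R-module s(F, Sigma):  F(S) = R-span of {s sigma}. *)
Definition sfilt (R : pzRingType) (G : groupType) (F : lmodType R)
    (act : G -> F -> F) (Sigma : seq F) (S : G -> Prop) : F -> Prop :=
  in_Rspan (fun v => exists s, exists2 sg, sg \in Sigma & S s /\ v = act s sg).

Definition RG_generates (R : pzRingType) (G : groupType) (F : lmodType R)
    (act : G -> F -> F) (Sigma : seq F) : Prop :=
  forall x : F, sfilt act Sigma (fun _ => True) x.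

Definition is_RG_hom (R : pzRingType) (G : groupType) (F F' : lmodType R)
    (act : G -> F -> F) (act' : G -> F' -> F') (phi : F -> F') : Prop :=
  (forall (r : R) x y, phi (r *: x + y) = r *: phi x + phi y) /\
  (forall g x, phi (act g x) = act' g (phi x)).

Definition boundedly_controlled (R : pzRingType) (G : groupType)
    (gens : seq G) (F F' : lmodType R) (FS : (G -> Prop) -> F -> Prop)
    (FS' : (G -> Prop) -> F' -> Prop) (f : F -> F') : Prop :=
  exists b : nat, forall (S : G -> Prop) (x : F),
    FS S x -> FS' (enlarge gens S b) (f x).

(* Main.v *)
Require Import Defs.
From HB Require Import structures.
From mathcomp Require Import all_boot all_order all_algebra.
Import GRing.Theory.
Local Open Scope ring_scope.

Set Implicit Arguments. Unset Strict Implicit.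
Section Aux.
Variable R : pzRingType.

Lemma span_nil (F : lmodType R) (P : F -> Prop) : in_Rspan P 0.
Proof. by exists [::]; split => //; rewrite big_nil. Qed.

Lemma span_add (F : lmodType R) (P : F -> Prop) x y :
  in_Rspan P x -> in_Rspan P y -> in_Rspan P (x + y).
Proof.
move=> [l1 [H1 ->]] [l2 [H2 ->]]; exists (l1 ++ l2); split.
  by move=> p; rewrite mem_cat => /orP [/H1|/H2].
by rewrite big_cat.
Qed.

Lemma span_scale (F : lmodType R) (P : F -> Prop) r x :
  in_Rspan P x -> in_Rspan P (r *: x).
Proof.
move=> [l [H ->]]; exists (map (fun p => (r * p.1, p.2)) l); split.
  by move=> p /mapP [q Hq ->] /=; apply: H.
rewrite big_map scaler_sumr; apply: eq_bigr => p _ /=; by rewrite scalerA.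
Qed.

Lemma span_single (F : lmodType R) (P : F -> Prop) v :
  P v -> in_Rspan P v.
Proof.
move=> Pv; exists [:: (1, v)]; split.
  by move=> p; rewrite inE => /eqP -> .
by rewrite big_seq1 scale1r.
Qed.

Lemma span_mono (F : lmodType R) (P Q : F -> Prop) x :
  (forall v, P v -> Q v) -> in_Rspan P x -> in_Rspan Q x.
Proof. by move=> PQ [l [H ->]]; exists l; split => // p /H /PQ. Qed.

Lemma lin0 (F F' : lmodType R) (f : F -> F') :
  (forall r x y, f (r *: x + y) = r *: f x + f y) -> f 0 = 0.
Proof.
move=> Hf; have := Hf 1 0 0; rewrite !scale1r addr0 => E.
by apply: (@addrI _ (f 0)); rewrite addr0 -E.
Qed.

Lemma lin_sum (F F' : lmodType R) (f : F -> F') (l : seq (R * F)) :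
  (forall r x y, f (r *: x + y) = r *: f x + f y) ->
  f (\sum_(p <- l) p.1 *: p.2) = \sum_(p <- l) p.1 *: f p.2.
Proof.
move=> Hf; elim: l => [|p l IH]; first by rewrite !big_nil (@lin0 _ _ f Hf).
by rewrite !big_cons Hf IH.
Qed.

Lemma span_map (F F' : lmodType R) (P : F -> Prop) (Q : F' -> Prop)
  (f : F -> F') x :
  (forall r x y, f (r *: x + y) = r *: f x + f y) ->
  (forall v, P v -> in_Rspan Q (f v)) -> in_Rspan P x -> in_Rspan Q (f x).
Proof.
move=> Hf HPQ [l [H ->]]; rewrite (lin_sum _ Hf).
elim: l H => [|p l IH] H; first by rewrite big_nil; apply: span_nil.
rewrite big_cons; apply: span_add.
  by apply: span_scale; apply: HPQ; apply: H; rewrite inE eqxx.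
by apply: IH => q Hq; apply: H; rewrite inE Hq orbT.
Qed.

End Aux.

Lemma wdl_mono (G : groupType) (gens : seq G) g h n m :
  (n <= m)%N -> word_dist_le gens g h n -> word_dist_le gens g h m.
Proof.
move=> nm [w [Hw [Hs E]]]; exists w; split => //; split => //.
exact: leq_trans Hs nm.
Qed.

Unset Implicit Arguments.
Theorem lemma2p4 (R : pzRingType) (G : groupType) (gens : seq G)
    (F F' : lmodType R) (act : G -> F -> F) (act' : G -> F' -> F')
    (SigmaF : seq F) (SigmaF' : seq F') (phi : F -> F') :
  noetherian R ->
  generates gens ->
  is_RG_action act -> is_RG_action act' ->
  RG_generates act SigmaF -> RG_generates act' SigmaF' ->
  is_RG_hom act act' phi ->
  boundedly_controlled gens (sfilt act SigmaF) (sfilt act' SigmaF') phi.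
Proof.
move=> _ Hgen _ [act'lin _ act'M] _ HF' [philin phiact].
pose ball b := fun g : G => word_dist_le gens 1%g g b.
have one : forall y, exists b, sfilt act' SigmaF' (ball b) y.
  move=> y; have [l [H ->]] := HF' y.
  elim: l H => [|p l IH] H.
    by exists 0%N; rewrite big_nil; apply: span_nil.
  have [b Hb] := IH (fun q Hq => H q (mem_behead (s:=p :: l) Hq)).
  have [s [sg Hsg [_ Ep]]] := H p (mem_head _ _).
  have [w [Hw Es]] := Hgen s.
  exists (maxn (size w) b); rewrite big_cons; apply: span_add.
    apply: span_scale; apply: span_single; exists s; exists sg => //; split => //.
    exists w; split => //; split; first by rewrite leq_maxl.
    by rewrite invg1 mul1g.
  apply: span_mono Hb => v [t [sg' H1 [H2 H3]]]; exists t; exists sg' => //; split => //.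
  by apply: wdl_mono H2; rewrite leq_maxr.
have all : exists b, forall sg, sg \in SigmaF ->
    sfilt act' SigmaF' (ball b) (phi sg).
  elim: SigmaF => [|a s [b Hb]]; first by exists 0%N.
  have [b' Hb'] := one (phi a).
  exists (maxn b b') => sg; rewrite inE => /orP [/eqP ->|/Hb H].
    apply: span_mono Hb' => v [t [sg' H1 [H2 H3]]]; exists t; exists sg' => //; split => //.
    by apply: wdl_mono H2; rewrite leq_maxr.
  apply: span_mono H => v [t [sg' H1 [H2 H3]]]; exists t; exists sg' => //; split => //.
  by apply: wdl_mono H2; rewrite leq_maxl.
have [b Hb] := all; exists b => S x Hx.
apply: (span_map philin _ Hx) => v [s [sg Hsg [HS ->]]].
rewrite phiact; apply: (span_map (act'lin s) _ (Hb _ Hsg)).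
move=> u [t [sg' H1 [H2 ->]]]; apply: span_single.
exists (s * t)%g; exists sg' => //; split; last by rewrite act'M.
exists s => //; move: H2 => [w [Hw [Hs E]]]; exists w; split => //; split => //.
by rewrite mulKg -E invg1 mul1g.
Qed.
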